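(* Let $\Gamma$ be a finite graph. The graph obtained from $\Gamma$ by repeatedly performing twin reductions (in any order) until no pair of twins remains is unique up to isomorphism, independent of the chosen sequence of reductions.
   Context: Graphs are simple (no loops). Two distinct vertices $v,w$ are open twins if they have the same open neighbourhoods (sets of adjacent vertices), and closed twins if they have the same closed neighbourhoods (neighbourhood together with the vertex itself); they are twins if they are open or closed twins. A twin reduction step takes a pair of twins $v,w$ and merges them into a single vertex, i.e. deletes one of them. A graph is twin-free if it has no pair of twins. The resulting twin-free graph is called the cokernel of $\Gamma$. *)

(* Defs.v *)
From mathcomp Require Import all_boot.
Set Implicit Arguments. Unset Strict Implicit. Unset Printing Implicit Defensive.

(* Intermediate graphs obtained by
   deleting vertices are the induced subgraphs on a vertex set S : {set T}. *)

Definition simple_graph (T : finType) (e : rel T) : Prop :=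
  symmetric e /\ irreflexive e.

Definition open_twins (T : finType) (e : rel T) (S : {set T}) (v w : T) : bool :=
  [&& v \in S, w \in S, v != w & [forall u in S, e v u == e w u]].

Definition closed_twins (T : finType) (e : rel T) (S : {set T}) (v w : T) : bool :=
  [&& v \in S, w \in S, v != w &
      [forall u in S, (e v u || (u == v)) == (e w u || (u == w))]].

Definition twins (T : finType) (e : rel T) (S : {set T}) (v w : T) : bool :=
  open_twins e S v w || closed_twins e S v w.

Definition twin_free (T : finType) (e : rel T) (S : {set T}) : bool :=
  [forall v in S, forall w in S, ~~ twins e S v w].

Definition twin_step (T : finType) (e : rel T) (S S' : {set T}) : Prop :=
  exists v w, twins e S v w /\ S' = S :\ w.

Inductive twin_reduces (T : finType) (e : rel T) : {set T} -> {set T} -> Prop :=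
  | tr_refl S : twin_reduces e S S
  | tr_step S S' S'' : twin_step e S S' -> twin_reduces e S' S'' ->
                       twin_reduces e S S''.

Definition induced_iso (T : finType) (e : rel T) (A B : {set T}) : Prop :=
  exists f : {x : T | x \in A} -> {x : T | x \in B},
    bijective f /\ forall x y, e (sval x) (sval y) = e (sval (f x)) (sval (f y)).

(* Main.v *)
Require Import Defs.
From mathcomp Require Import all_boot zify.
Set Implicit Arguments. Unset Strict Implicit. Unset Printing Implicit Defensive.

Section S.
Variables (T : finType) (e : rel T).
Hypothesis se : symmetric e.
Hypothesis ie : irreflexive e.

Definition isoF (S S' : {set T}) (h h' : T -> T) : Prop :=
  [/\ (forall x, x \in S -> h x \in S'), (forall y, y \in S' -> h' y \in S),
      (forall x, x \in S -> h' (h x) = x), (forall y, y \in S' -> h (h' y) = y)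
    & (forall x y, x \in S -> y \in S -> e x y = e (h x) (h y))].

Definition iso' S S' := exists h h', isoF S S' h h'.

Lemma iso_refl S : iso' S S.
Proof. by exists id, id; split. Qed.

Lemma iso_sym S S' : iso' S S' -> iso' S' S.
Proof.
case=> h [h' [H1 H2 H3 H4 H5]]; exists h', h; split=> //.
by move=> x y xS yS; rewrite (H5 (h' x) (h' y)) ?H2 ?H4.
Qed.

Lemma iso_trans S1 S2 S3 : iso' S1 S2 -> iso' S2 S3 -> iso' S1 S3.
Proof.
case=> h [h' [H1 H2 H3 H4 H5]]; case=> g [g' [G1 G2 G3 G4 G5]].
exists (g \o h), (h' \o g'); split=> /=.
- by move=> x xS; apply/G1/H1.
- by move=> x xS; apply/H2/G2.
- by move=> x xS; rewrite G3 ?H3 ?H1.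
- by move=> x xS; rewrite H4 ?G4 ?G2.
- by move=> x y xS yS; rewrite H5 // G5 ?H1.
Qed.

Lemma isoF_eq S S' h h' x y : isoF S S' h h' -> x \in S -> y \in S ->
  (h x == h y) = (x == y).
Proof.
case=> H1 H2 H3 H4 H5 xS yS; apply/eqP/eqP=> [E|->] //.
by rewrite -(H3 x xS) E H3.
Qed.

Lemma twins_mem S v w : twins e S v w -> [/\ v \in S, w \in S & v != w].
Proof. by case/orP=> /and4P[]. Qed.

Lemma twins_iso S S' h h' v w : isoF S S' h h' -> twins e S v w ->
  twins e S' (h v) (h w).
Proof.
move=> hF; have [H1 H2 H3 H4 H5] := hF.
case/orP=> /and4P[vS wS nvw /forallP F]; apply/orP; [left|right];
  apply/and4P; split; rewrite ?H1 ?(isoF_eq hF) //;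
  apply/forallP=> u; apply/implyP=> uS; rewrite -(H4 u uS);
  have zS := H2 u uS; have := F (h' u); rewrite zS /= -!H5 //.
by rewrite !(isoF_eq hF).
Qed.

Lemma iso_restrict S S' h h' w : isoF S S' h h' -> w \in S ->
  isoF (S :\ w) (S' :\ h w) h h'.
Proof.
move=> hF wS; have [H1 H2 H3 H4 H5] := hF; split.
- move=> x; rewrite !inE => /andP[nxw xS]. by rewrite (H1 x xS) (isoF_eq hF) // nxw.
- move=> y; rewrite !inE => /andP[nyw yS]; rewrite H2 // andbT.
  by apply: contra nyw => /eqP <-; rewrite H4.
- by move=> x; rewrite inE => /andP[_ /H3].
- by move=> x; rewrite inE => /andP[_ /H4].
- by move=> x y; rewrite !inE => /andP[_ xS] /andP[_ yS]; apply: H5.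
Qed.

Definition swap (v w x : T) := if x == v then w else if x == w then v else x.

Lemma twins_nb S v w y : twins e S v w -> y \in S -> y != v -> y != w ->
  e v y = e w y.
Proof.
case/orP=> /and4P[_ _ _ /forallP F] yS yv yw; have := F y; rewrite yS /=.
  by move/eqP.
by rewrite (negbTE yv) (negbTE yw) !orbF => /eqP.
Qed.

Lemma swap_iso S v w : twins e S v w -> iso' (S :\ w) (S :\ v).
Proof.
move=> tw; have [vS wS nvw] := twins_mem tw.
have sw2 x : swap v w (swap v w x) = x.
  have nwv : w != v by rewrite eq_sym.
  rewrite /swap; case: (eqVneq x v) => [->|xv].
    by do 3?rewrite ?eqxx ?(negbTE nwv) /=.
  case: (eqVneq x w) => [->|xw]; first by do 3?rewrite ?eqxx ?(negbTE nwv) /=.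
  by rewrite (negbTE xv) (negbTE xw).
exists (swap v w), (swap v w); split=> //.
- move=> x; rewrite !inE /swap => /andP[xw xS].
  case: (eqVneq x v) => [_|xv]; first by rewrite eq_sym nvw.
  by rewrite (negbTE xw) xv.
- move=> x; rewrite !inE /swap => /andP[xv xS].
  rewrite (negbTE xv); case: (eqVneq x w) => [_|xw]; first by rewrite nvw.
  by rewrite xw.
- move=> x y; rewrite !inE /swap => /andP[xw xS] /andP[yw yS].
  rewrite (negbTE xw) (negbTE yw).
  case: (eqVneq x v) => [->|xv]; case: (eqVneq y v) => [->|yv] //.
  + by rewrite !ie.
  + exact: twins_nb tw yS yv yw.
  + by rewrite se (twins_nb tw xS xv xw) se.
Qed.

Lemma twins_sub S v w x : twins e S v w -> v != x -> w != x ->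
  twins e (S :\ x) v w.
Proof.
move=> tw vx wx; have [vS wS nvw] := twins_mem tw.
case/orP: tw => /and4P[_ _ _ /forallP F]; apply/orP; [left|right];
  apply/and4P; split; rewrite ?inE ?vS ?wS ?vx ?wx //;
  apply/forallP=> u; apply/implyP; rewrite inE => /andP[_ uS];
  by have := F u; rewrite uS.
Qed.

Lemma tf_nostep S v w : twin_free e S -> twins e S v w -> False.
Proof.
move=> tf tw; have [vS wS _] := twins_mem tw.
by move: tf => /forallP/(_ v)/implyP/(_ vS)/forallP/(_ w)/implyP/(_ wS); rewrite tw.
Qed.


Lemma exists_tf n (S : {set T}) : #|S| < n -> exists A, twin_reduces e S A /\ twin_free e A.
Proof.
elim: n S => // n IH S.
case: (boolP (twin_free e S)) => [tf _|]; first by exists S; split=> //; apply: tr_refl.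
rewrite /twin_free negb_forall => /existsP[v]; rewrite negb_imply => /andP[vS].
rewrite negb_forall => /existsP[w]; rewrite negb_imply negbK => /andP[wS tw] Sn.
have: #|S :\ w| < n by move: Sn; rewrite (cardsD1 w S) wS.
case/IH=> A [rA tA]; exists A; split=> //.
by apply: tr_step rA; exists v, w.
Qed.

Lemma iso_card S S' : iso' S S' -> #|S| = #|S'|.
Proof.
case=> h [h' hF]; have [H1 H2 H3 H4 H5] := hF.
have -> : S' = h @: S.
  apply/setP=> y; apply/idP/imsetP=> [yS|[x xS ->]]; last exact: H1.
  by exists (h' y); rewrite ?H2 ?H4.
by rewrite card_in_imset // => x y xS yS /eqP; rewrite (isoF_eq hF) // => /eqP.
Qed.

Lemma red_inv (S A : {set T}) : twin_reduces e S A ->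
  A = S \/ exists v w, twins e S v w /\ twin_reduces e (S :\ w) A.
Proof. by case=> [S0|S0 S1 A0 [v [w [tw ->]]] r]; [left|right; exists v, w]. Qed.

Lemma main_ind n (S S' A B : {set T}) : #|S| < n -> iso' S S' ->
  twin_reduces e S A -> twin_free e A ->
  twin_reduces e S' B -> twin_free e B -> iso' A B.
Proof.
elim: n S S' A B => // n IH S S' A B Sn iSS'.
move=> /red_inv[->|[v1 [w1 [tw1 rA]]]] tA /red_inv[->|[v2 [w2 [tw2 rB]]]] tB //.
- case: (iso_sym iSS') => g [g' gF]; case: (tf_nostep tA (twins_iso gF tw2)).
- case: iSS' => g [g' gF]; case: (tf_nostep tB (twins_iso gF tw1)).
have [v1S w1S _] := twins_mem tw1.
have [v2S w2S _] := twins_mem tw2.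
case: iSS' => h [h' hF].
have iS1 : iso' (S :\ w1) (S' :\ h w1) by exists h, h'; apply: iso_restrict.
have tw1' := twins_iso hF tw1.
have n1 : #|S :\ w1| < n by move: Sn; rewrite (cardsD1 w1 S) w1S.
have n2 : #|S' :\ w2| < n.
  have c := cardsD1 w2 S'; rewrite w2S in c.
  have := iso_card (ex_intro _ h (ex_intro _ h' hF)); lia.
case: (eqVneq (h w1) w2) => [E|ne1].
  by rewrite E in iS1; apply: (IH _ _ _ _ n1 iS1 rA tA rB tB).
case: (eqVneq v2 (h w1)) => [E2|ne2].
  rewrite E2 in tw2; have := iso_trans iS1 (iso_sym (swap_iso tw2)).
  by move=> i; apply: (IH _ _ _ _ n1 i rA tA rB tB).
case: (eqVneq (h v1) w2) => [E3|ne3].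
  rewrite E3 in tw1'; have := iso_trans iS1 (swap_iso tw1').
  by move=> i; apply: (IH _ _ _ _ n1 i rA tA rB tB).
have [D [rD tD]] := exists_tf (ltnSn #|S' :\ h w1 :\ w2|).
have r1 : twin_reduces e (S' :\ h w1) D.
  apply: tr_step rD; exists v2, w2; split=> //.
  by apply: twins_sub; rewrite // eq_sym.
have r2 : twin_reduces e (S' :\ w2) D.
  apply: tr_step rD; exists (h v1), (h w1); split.
    exact: twins_sub.
  by apply/setP=> x; rewrite !inE andbCA.
exact: iso_trans (IH _ _ _ _ n1 iS1 rA tA r1 tD) (IH _ _ _ _ n2 (iso_refl _) r2 tD rB tB).
Qed.
End S.

Theorem mainTheorem15 (T : finType) (e : rel T) :
  simple_graph e ->
  forall A B : {set T},
    twin_reduces e [set: T] A -> twin_free e A ->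
    twin_reduces e [set: T] B -> twin_free e B ->
    induced_iso e A B.
Proof.
case=> se ie A B rA tA rB tB.
have [h [h' [H1 H2 H3 H4 H5]]] :=
  main_ind se ie (ltnSn #|[set: T]|) (iso_refl e _) rA tA rB tB.
pose f (x : {x : T | x \in A}) : {x : T | x \in B} := exist _ (h (sval x)) (H1 _ (svalP x)).
pose g (y : {x : T | x \in B}) : {x : T | x \in A} := exist _ (h' (sval y)) (H2 _ (svalP y)).
exists f; split.
  exists g.
    by move=> x; apply: val_inj; rewrite /= H3 // (svalP x).
  by move=> x; apply: val_inj; rewrite /= H4 // (svalP x).
by move=> x y; rewrite /= H5 // ?(svalP x) ?(svalP y).
Qed.
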